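(* There exists a unique root-lattice-graded $\mathbb{Q}(q)$-algebra surjection $\pi_B:U_q^+\to\mathcal{P}_B$ with $\pi_B(E_i)=e_i$ for all $i=1,\dots,n$.
   Context: $\mathfrak{g}$ is a symmetrizable Kac–Moody algebra of rank $n$ with Cartan matrix $A=(a_{ij})$; $d_1,\dots,d_n$ are coprime positive integers with $c_{ij}:=d_ia_{ij}=d_ja_{ji}$, and the invariant form is normalized by $(\alpha_i,\alpha_j)=c_{ij}$. For each pair $i<j$ with $a_{ij}\ne0$ choose $\sigma_{ij}\in\{\pm1\}$, and set $b_{ij}=\sigma_{ij}c_{ij}$ ($i<j$), $b_{ii}=0$, $b_{ij}=-\sigma_{ji}c_{ij}$ ($i>j$) (with $b_{ij}=0$ when $a_{ij}=0$). $U_q^+$ is the subalgebra of the quantum enveloping algebra $U_q(\mathfrak{g})$ generated by $E_1,\dots,E_n$ (equivalently, the $\mathbb{Q}(q)$-algebra on $E_i$ subject to the quantum Serre relations $\sum_{k=0}^{1-a_{ij}}(-1)^k\binom{1-a_{ij}}{k}_{q_i}E_i^{1-a_{ij}-k}E_jE_i^k=0$, $i\ne j$), graded by weight with $E_i$ of weight $\alpha_i$. $\mathcal{P}_B$ is the $\mathbb{Q}(q)$-algebra generated by $e_1,\dots,e_n$ with relations $e_ie_j=q^{b_{ij}}e_je_i$, graded by giving $e_i$ weight $\alpha_i$. *)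

(* Defs.v *)
From HB Require Import structures.
From mathcomp Require Import all_boot all_order all_algebra fraction.
Set Implicit Arguments. Unset Strict Implicit. Unset Printing Implicit Defensive.
Import Order.TTheory GRing.Theory Num.Theory.
Local Open Scope ring_scope.

Definition Qq : fieldType := {fraction {poly rat}}.
Definition qq : Qq := @FracField.tofrac _ ('X : {poly rat}).

Definition qint (F : fieldType) (t : F) (m : nat) : F :=
  (t ^+ m - t ^- m) / (t - t^-1).
Definition qfact (F : fieldType) (t : F) (m : nat) : F :=
  \prod_(1 <= k < m.+1) qint t k.
Definition qbinom (F : fieldType) (t : F) (m k : nat) : F :=
  qfact t m / (qfact t k * qfact t (m - k)).

Definition symmetrizable_GCM (n : nat) (A : 'M[int]_n) (d : 'I_n -> nat) : Prop :=
  [/\ (forall i, A i i = 2),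
      (forall i j, i != j -> A i j <= 0),
      (forall i j, (A i j == 0) = (A j i == 0)),
      (forall i, (0 < d i)%N) /\ (\big[gcdn/0%N]_(i < n) d i = 1%N) &
      (forall i j, (d i)%:Z * A i j = (d j)%:Z * A j i)].

Definition cmat (n : nat) (A : 'M[int]_n) (d : 'I_n -> nat) (i j : 'I_n) : int :=
  (d i)%:Z * A i j.

Definition sign_choice (n : nat) (A : 'M[int]_n) (sigma : 'I_n -> 'I_n -> int) : Prop :=
  forall i j : 'I_n, (i < j)%N -> A i j != 0 -> sigma i j = 1 \/ sigma i j = -1.

Definition bmat (n : nat) (A : 'M[int]_n) (d : 'I_n -> nat)
    (sigma : 'I_n -> 'I_n -> int) (i j : 'I_n) : int :=
  if (i < j)%N then sigma i j * cmat A d i j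
  else if i == j then 0
  else - (sigma j i * cmat A d i j).

(* Monomials, weights (root lattice = Z^n in the basis of simple roots). *)
Definition monom (K : fieldType) (R : algType K) (n : nat) (x : 'I_n -> R)
    (w : seq 'I_n) : R := \prod_(i <- w) x i.
Definition wt (n : nat) (w : seq 'I_n) : 'I_n -> int := fun j => (count_mem j w)%:Z.

Definition in_span (K : fieldType) (R : algType K) (n : nat) (x : 'I_n -> R) (v : R) : Prop :=
  exists s : seq (seq 'I_n * K), v = \sum_(p <- s) p.2 *: monom x p.1.
Definition in_weight (K : fieldType) (R : algType K) (n : nat) (x : 'I_n -> R)
    (beta : 'I_n -> int) (v : R) : Prop :=
  exists s : seq (seq 'I_n * K),
    (forall p, p \in s -> wt p.1 =1 beta) /\ v = \sum_(p <- s) p.2 *: monom x p.1.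

(* (A, x) is the K-algebra presented by generators x_1..x_n and relations Rel:
   x satisfies Rel, x generates A, and every family y in an algebra B
   satisfying Rel extends uniquely along x to a K-algebra morphism A -> B. *)
Definition presents (K : fieldType) (n : nat) (A : algType K) (x : 'I_n -> A)
    (Rel : forall B : algType K, ('I_n -> B) -> Prop) : Prop :=
  [/\ Rel A x,
      (forall v, in_span x v),
      (forall (B : algType K) (y : 'I_n -> B), Rel B y ->
          exists f : {lrmorphism A -> B}, forall i, f (x i) = y i) &
      (forall (B : algType K) (f g : {lrmorphism A -> B}),
          (forall i, f (x i) = g (x i)) -> f =1 g)].

Definition serre_rels (n : nat) (A : 'M[int]_n) (d : 'I_n -> nat)
    (B : algType Qq) (E : 'I_n -> B) : Prop :=
  forall i j : 'I_n, i != j ->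
    let m := `|1 - A i j|%N in
    \sum_(k < m.+1) ((-1) ^+ k * qbinom (qq ^+ d i) m k) *:
        (E i ^+ (m - k) * E j * E i ^+ k) = 0.

Definition qcomm_rels (n : nat) (b : 'I_n -> 'I_n -> int)
    (B : algType Qq) (e : 'I_n -> B) : Prop :=
  forall i j : 'I_n, e i * e j = (qq ^ b i j) *: (e j * e i).

(* Main.v *)
Require Import Defs.
From HB Require Import structures.
From mathcomp Require Import all_boot all_order all_algebra fraction.
From mathcomp Require Import ring.
Import Order.TTheory GRing.Theory Num.Theory.
Local Open Scope ring_scope.
Section Q.
Variable F : fieldType.

Lemma tt1 (t : F) : t - t^-1 != 0 -> t * t - 1 != 0.
Proof.
move=> D0; apply: contra D0 => /eqP T; apply/eqP.
case: (eqVneq t 0) => [->|t0]; first by rewrite invr0 subrr.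
have -> : t - t^-1 = (t * t - 1) / t by field.
by rewrite T mul0r.
Qed.

Lemma qint_inv (t : F) k : t != 0 -> qint t^-1 k = qint t k.
Proof.
move=> t0; rewrite /qint !exprVn !invrK.
have X0 : t ^+ k != 0 by rewrite expf_neq0.
case: (eqVneq (t - t^-1) 0) => D0.
  have -> : t^-1 - t = 0 by rewrite -opprB D0 oppr0.
  by rewrite D0 !invr0 !mulr0.
have D1 : t^-1 - t != 0 by rewrite -opprB oppr_eq0.
have T2 : t * t - 1 != 0.
  apply: contra D0 => /eqP T; apply/eqP.
  have -> : t - t^-1 = (t * t - 1) / t by field.
  by rewrite T mul0r.
have T3 : 1 + - t * t != 0 by rewrite mulNr -opprB oppr_eq0.
field. by rewrite t0 T2 X0 T3.
Qed.

Lemma qfact_inv (t : F) m : t != 0 -> qfact t^-1 m = qfact t m.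
Proof. by move=> t0; rewrite /qfact; apply: eq_bigr => k _; rewrite qint_inv. Qed.

Lemma qbinom_inv (t : F) m k : t != 0 -> qbinom t^-1 m k = qbinom t m k.
Proof. by move=> t0; rewrite /qbinom !qfact_inv. Qed.

Lemma qfactS (t : F) m : qfact t m.+1 = qfact t m * qint t m.+1.
Proof. by rewrite /qfact big_nat_recr. Qed.

Lemma qfact_neq0 (t : F) m : (forall k, (0 < k)%N -> qint t k != 0) -> qfact t m != 0.
Proof.
move=> H; elim: m => [|m IH]; first by rewrite /qfact big_geq // oner_neq0.
by rewrite qfactS mulf_neq0 // H.
Qed.

Lemma qint_neq0_D (t : F) : (forall k, (0 < k)%N -> qint t k != 0) -> t - t^-1 != 0.
Proof. move=> H; apply: contra (H 1%N isT) => /eqP D; by rewrite /qint D invr0 mulr0. Qed.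

Lemma qpascal (t : F) m k : t != 0 -> (forall k, (0 < k)%N -> qint t k != 0) ->
  (k < m)%N ->
  qbinom t m.+1 k.+1 = t ^- k.+1 * qbinom t m k.+1 + t ^+ (m - k) * qbinom t m k.
Proof.
move=> t0 H km.
have [b ->] : exists b, m = (k + b).+1 by exists (m - k.+1)%N; rewrite -addSn subnKC.
rewrite /qbinom.
have e1 : ((k + b).+2 - k.+1 = b.+1)%N by rewrite subSS -addnS addKn.
have e2 : ((k + b).+1 - k.+1 = b)%N by rewrite subSS addKn.
have e3 : ((k + b).+1 - k = b.+1)%N by rewrite -addnS addKn.
rewrite e1 e2 e3.
rewrite (qfactS t (k + b).+1) (qfactS t k) (qfactS t b).
have D := qint_neq0_D t H.
have Fa := qfact_neq0 t k H. have Fb := qfact_neq0 t b H.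
have Fab := qfact_neq0 t (k+b).+1 H.
have Ia : qint t k.+1 != 0 by apply: H.
have Ib : qint t b.+1 != 0 by apply: H.
have E : qint t (k + b).+2 = t^-k.+1 * qint t b.+1 + t^+ b.+1 * qint t k.+1.
  have -> : (k+b).+2 = (k.+1 + b.+1)%N by rewrite addnS addSn.
  rewrite /qint exprD.
  have X0 : t ^+ k.+1 != 0 by rewrite expf_neq0.
  have Y0 : t ^+ b.+1 != 0 by rewrite expf_neq0.
  rewrite invfM; field. by rewrite t0 tt1 // X0 Y0.
rewrite E; field.
by rewrite Fa Fb Ia Ib expf_neq0.
Qed.

Definition C (t : F) m k := if (k <= m)%N then qbinom t m k else 0.
Definition S (t : F) m z N := \sum_(k < N) (-1)^+k * C t m k * z^+k.

Lemma qfact0 (t : F) : qfact t 0 = 1.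
Proof. by rewrite /qfact big_geq. Qed.

Lemma qbinom_nn (t : F) m : (forall k, (0 < k)%N -> qint t k != 0) -> qbinom t m m = 1.
Proof. by move=> H; rewrite /qbinom subnn qfact0 mulr1 divff // qfact_neq0. Qed.

Lemma qbinom_n0 (t : F) m : (forall k, (0 < k)%N -> qint t k != 0) -> qbinom t m 0 = 1.
Proof. by move=> H; rewrite /qbinom subn0 qfact0 mul1r divff // qfact_neq0. Qed.

Lemma Cpascal (t : F) m k : t != 0 -> (forall k, (0 < k)%N -> qint t k != 0) ->
  C t m.+1 k.+1 = t ^- k.+1 * C t m k.+1 + t ^+ (m - k) * C t m k.
Proof.
move=> t0 H; rewrite /C ltnS.
case: (ltngtP k m) => km.
- by rewrite qpascal.
- by rewrite !mulr0 addr0.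
- by rewrite km mulr0 add0r subnn expr0 mul1r !qbinom_nn.
Qed.

Lemma S_ext (t : F) m z N : (m < N)%N -> S t m z N = S t m z m.+1.
Proof.
elim: N => [//|N IH]; rewrite ltnS leq_eqVlt => /orP [/eqP -> //| mN].
by rewrite -IH // {1}/S big_ord_recr /= /C leqNgt mN /= mulr0 mul0r addr0.
Qed.

Lemma S_rec (t : F) m z : t != 0 -> (forall k, (0 < k)%N -> qint t k != 0) ->
  S t m.+1 z m.+2 = (1 - t ^+ m * z) * S t m (t^-1 * z) m.+1.
Proof.
move=> t0 H.
have L : S t m.+1 z m.+2 = 1 + (\sum_(i < m.+1) (-1)^+i.+1 * (t^-i.+1 * C t m i.+1) * z^+i.+1
     + \sum_(i < m.+1) (-1)^+i.+1 * (t^+(m-i) * C t m i) * z^+i.+1).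
  rewrite /S big_ord_recl /= expr0 !mul1r mulr1 /C leq0n qbinom_n0 //.
  congr (_ + _); rewrite -big_split /=; apply: eq_bigr => i _.
  by rewrite /bump /= add1n -/(C t m.+1 i.+1) Cpascal // mulrDr mulrDl.
have A : 1 + \sum_(i < m.+1) (-1)^+i.+1 * (t^-i.+1 * C t m i.+1) * z^+i.+1
     = S t m (t^-1*z) m.+2.
  rewrite /S [RHS]big_ord_recl /= expr0 !mul1r mulr1 /C leq0n qbinom_n0 //.
  congr (_ + _); apply: eq_bigr => i _.
  rewrite /bump /= add1n exprMn exprVn; field.
  by rewrite expf_neq0.
have B : \sum_(i < m.+1) (-1)^+i.+1 * (t^+(m-i) * C t m i) * z^+i.+1
     = -(t^+m * z * S t m (t^-1*z) m.+1).
  rewrite /S mulr_sumr -sumrN; apply: eq_bigr => i _.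
  have iu : t ^+ i != 0 by rewrite expf_neq0.
  rewrite exprB ?ltnS ?leq_ord ?unitfE // exprMn exprVn exprS exprS; field.
  by rewrite iu.
rewrite L addrA A B (@S_ext t m (t^-1 * z) m.+2 (ltnW (ltnSn m.+1))).
by rewrite mulrBl mul1r.
Qed.

Lemma S_root (t : F) m : t != 0 -> (forall k, (0 < k)%N -> qint t k != 0) ->
  S t m.+1 (t ^+ m)^-1 m.+2 = 0.
Proof.
move=> t0 H; rewrite S_rec // divff ?subrr ?mul0r // expf_neq0 //.
Qed.

Lemma serre_scalar (t : F) m (s : F) : t != 0 -> (forall k, (0 < k)%N -> qint t k != 0) ->
  (s = (t ^+ m)^-1 \/ s = t ^+ m) ->
  \sum_(k < m.+2) ((-1) ^+ k * qbinom t m.+1 k) * s ^+ k = 0.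
Proof.
move=> t0 H hs.
have E : forall (u s : F), \sum_(k < m.+2) ((-1) ^+ k * qbinom u m.+1 k) * s ^+ k
   = S u m.+1 s m.+2.
  move=> u s'; apply: eq_bigr => k _; by rewrite /C -ltnS ltn_ord.
case: hs => ->.
  by rewrite E S_root.
have u0 : t^-1 != 0 by rewrite invr_eq0.
have Hu : forall k, (0 < k)%N -> qint t^-1 k != 0 by move=> k k0; rewrite qint_inv // H.
have -> : t ^+ m = ((t^-1) ^+ m)^-1 by rewrite exprVn invrK.
rewrite -[RHS](S_root (t^-1) m u0 Hu) -E; apply: eq_bigr => k _.
by rewrite qbinom_inv.
Qed.
End Q.

Lemma qqXn_neq1 N : (0 < N)%N -> qq ^+ N != 1.
Proof.
move=> N0; rewrite /qq -tofracXn -tofrac1 tofrac_eq.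
apply/negP => /eqP h; have := congr1 (fun p : {poly rat} => size p) h.
by rewrite /= size_polyXn size_poly1; case: N N0 h.
Qed.

Lemma qq_neq0 : qq != 0.
Proof. by rewrite /qq -tofrac0 tofrac_eq polyX_eq0. Qed.

Lemma sub_inv_neq0 (F : fieldType) (x : F) : x != 0 -> x * x != 1 -> x - x^-1 != 0.
Proof.
move=> x0 xx; apply: contra xx => /eqP h; apply/eqP.
have : (x - x^-1) * x = 0 by rewrite h mul0r.
rewrite mulrBl mulVf // => /eqP; rewrite subr_eq0 => /eqP ->.
by [].
Qed.

Lemma qint_qq_neq0 (dd : nat) k : (0 < dd)%N -> (0 < k)%N -> qint (qq ^+ dd) k != 0.
Proof.
move=> d0 k0; rewrite /qint mulf_neq0 //.
  apply: sub_inv_neq0; first by rewrite !expf_neq0 // qq_neq0.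
  by rewrite -!exprM -exprD qqXn_neq1 // addn_gt0 !muln_gt0 d0 k0.
rewrite invr_eq0 -(expr1 (qq ^+ dd)) sub_inv_neq0 //; first by rewrite !expf_neq0 // qq_neq0.
by rewrite -!exprM -exprD qqXn_neq1 // addn_gt0 !muln_gt0 d0.
Qed.

Lemma monom_morph (U P : algType Qq) n (E : 'I_n -> U) (e : 'I_n -> P)
  (f : {lrmorphism U -> P}) : (forall i, f (E i) = e i) ->
  forall (s : seq (seq 'I_n * Qq)),
  f (\sum_(p <- s) p.2 *: monom E p.1) = \sum_(p <- s) p.2 *: monom e p.1.
Proof.
move=> fE s; rewrite raddf_sum; apply: eq_bigr => p _.
have L := linearZ_LR f p.2 (monom E p.1). apply: etrans; first exact: L. rewrite /= /monom rmorph_prod; congr (_ *: _); apply: eq_bigr => i _.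
exact: fE.
Qed.

Lemma comm_pow (P : algType Qq) (x y : P) (s : Qq) : y * x = s *: (x * y) ->
  forall k, y * x ^+ k = s ^+ k *: (x ^+ k * y).
Proof.
move=> h; elim=> [|k IH]; first by rewrite !expr0 mulr1 mul1r scale1r.
rewrite [x ^+ k.+1]exprSr (mulrA y) IH -scalerAl -(mulrA (x ^+ k) y x) h.
by rewrite -scalerAr scalerA (mulrA (x ^+ k) x y) [s ^+ k.+1]exprSr.
Qed.

Lemma serre_P (n : nat) (A : 'M[int]_n) (d : 'I_n -> nat)
    (sigma : 'I_n -> 'I_n -> int) (P : algType Qq) (e : 'I_n -> P) :
  symmetrizable_GCM A d -> sign_choice A sigma ->
  qcomm_rels (bmat A d sigma) e -> serre_rels A d e.
Proof.
case=> Hdiag Hneg Hzero [Hd _] Hsym Hsig Hq i j ij /=.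
set m' := `|A i j|%N.
have Aij : A i j = - (m'%:Z) by rewrite /m' lez0_abs ?opprK // Hneg.
have -> : `|1 - A i j|%N = m'.+1.
  by rewrite Aij opprK -(add1n m').
set t := qq ^+ d i.
set s := qq ^ (bmat A d sigma j i).
have t0 : t != 0 by rewrite expf_neq0 // qq_neq0.
have Ht : forall k, (0 < k)%N -> qint t k != 0 by move=> k; apply: qint_qq_neq0.
have [eps [heps hb]] : exists eps : int, (eps = 1 \/ eps = -1) /\
    bmat A d sigma j i = eps * ((d i)%:Z * A i j).
  have cji : cmat A d j i = (d i)%:Z * A i j by rewrite /cmat Hsym.
  case: (eqVneq (A i j) 0) => a0.
    exists 1; split; first by left.
    rewrite /bmat cji a0 !mulr0 oppr0; case: ifP => //; by case: ifP.
  have a0' : A j i != 0 by rewrite -(Hzero i j).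
  rewrite /bmat cji.
  case: ifP => ji.
    by exists (sigma j i); split => //; apply: Hsig.
  rewrite eq_sym (negbTE ij).
  have lij : (i < j)%N by rewrite ltn_neqAle leqNgt ji andbT; exact: ij.
  exists (- sigma i j); split; last by rewrite mulNr.
  by case: (Hsig i j lij a0) => ->; [right|left; rewrite opprK].
have hs : s = (t ^+ m')^-1 \/ s = t ^+ m'.
  rewrite /s hb Aij mulrN -PoszM /t -exprM.
  case: heps => ->.
    by left; rewrite mul1r -invr_expz.
  by right; rewrite mulN1r opprK.
have step : forall k : 'I_m'.+2,
   e i ^+ (m'.+1 - k) * e j * e i ^+ k = s ^+ k *: (e i ^+ m'.+1 * e j).
  move=> k; rewrite -(mulrA (e i ^+ (m'.+1 - k))) (@comm_pow P (e i) (e j) s (Hq j i)) -scalerAr (mulrA (e i ^+ (m'.+1 - k))) -exprD subnK //.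
  by rewrite -ltnS.
under eq_bigr => k _ do rewrite step scalerA.
by rewrite -scaler_suml serre_scalar // scale0r.
Qed.

Theorem proposition4p2 (n : nat) (A : 'M[int]_n) (d : 'I_n -> nat)
    (sigma : 'I_n -> 'I_n -> int)
    (U : algType Qq) (E : 'I_n -> U) (P : algType Qq) (e : 'I_n -> P) :
  symmetrizable_GCM A d -> sign_choice A sigma ->
  presents E (serre_rels A d) ->
  presents e (qcomm_rels (bmat A d sigma)) ->
  exists pi : {lrmorphism U -> P},
    [/\ (forall i, pi (E i) = e i),
        (forall beta v, in_weight E beta v -> in_weight e beta (pi v)),
        (forall w : P, exists v : U, pi v = w) &
        (forall pi' : {lrmorphism U -> P},
           (forall i, pi' (E i) = e i) ->
           (forall beta v, in_weight E beta v -> in_weight e beta (pi' v)) ->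
           (forall w : P, exists v : U, pi' v = w) ->
           pi' =1 pi)].
Proof.
move=> HA Hs [_ _ HE3 HE4] [Hq HP2 _ _].
have [pi Hpi] := HE3 P e (@serre_P n A d sigma P e HA Hs Hq).
exists pi; split => //.
- move=> beta v [s [Hw ->]]; exists s; split => //.
  exact: monom_morph.
- move=> w; have [s ->] := HP2 w.
  by exists (\sum_(p <- s) p.2 *: monom E p.1); apply: monom_morph.
- move=> pi' H1 _ _; apply: HE4 => i; by rewrite H1 Hpi.
Qed.
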